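(* For every integer $n>1$, \[ \omega(n-1)=\sum_{\substack{m+k=n\\ m\ge1,\ k\ge0}}\mu(m)\,\Omega_m(k), \] where $\mu$ is the Möbius function.
   Context: $\omega:\mathbb{Z}\to\mathbb{Z}$ is defined by $\omega(0)=1$; $\omega(m)=(-1)^j$ if $m=\frac{3j^2\pm j}{2}$ for some integer $j\ge1$; $\omega(m)=0$ otherwise (in particular for $m<0$). For $m\ge1$ and integer $k$, $\Omega_m(k)=\sum_{j\ge0}\omega(k-jm)=\omega(k)+\omega(k-m)+\omega(k-2m)+\cdots$. *)

(* Defs.v *)
From mathcomp Require Import all_boot all_order all_algebra.
Set Implicit Arguments. Unset Strict Implicit. Unset Printing Implicit Defensive.
Import Order.TTheory GRing.Theory Num.Theory.
Local Open Scope ring_scope.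

(* Pentagonal-number indicator on naturals:
   omega_nat 0 = 1; omega_nat m = (-1)^j if 2m = 3j^2 + j or 2m = 3j^2 - j
   for some j >= 1 (such j satisfies j <= m, and is unique since the
   generalized pentagonal numbers are distinct); 0 otherwise. *)
Definition omega_nat (m : nat) : int :=
  if m == 0%N then 1 else
  match [seq j <- iota 1 m |
           (3 * j ^ 2 + j == 2 * m)%N || (3 * j ^ 2 - j == 2 * m)%N] with
  | j :: _ => (-1) ^+ j
  | [::] => 0
  end.

Definition omega (m : int) : int :=
  match m with
  | Posz n => omega_nat n
  | Negz _ => 0
  end.

(* Omega_m(k) = sum_{j >= 0} omega(k - j m).  For m >= 1 the terms with
   j > |k| have negative argument, hence vanish; we sum j = 0 .. |k|. *)
Definition Omega (m : nat) (k : int) : int :=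
  \sum_(0 <= j < `|k|%N.+1) omega (k - (j * m)%:Z).

Definition moebius (m : nat) : int :=
  if all (fun p => logn p m == 1%N) (primes m)
  then (-1) ^+ size (primes m) else 0.

(* Main.v *)
Require Import Defs.
From mathcomp Require Import all_boot all_order all_algebra zify.
Import Order.TTheory GRing.Theory Num.Theory.
Local Open Scope ring_scope.

Lemma sumL (G : nat -> int) (p K : nat) : (0 < p)%N ->
  \sum_(0 <= j < K) G (j.+1 * p)%N =
  \sum_(0 <= x < (K * p).+1 | ((p %| x) && (0 < x))%N) G x.
Proof.
move=> p0; elim: K => [|K IH].
  by rewrite big_geq // mul0n big_mkcond big_nat1 andbF.
rewrite (big_nat_recr K 0) //= IH [RHS](big_cat_nat _ (n:=((K * p).+1)%N)) //=; last first.
  rewrite mulSn; lia.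
congr (_ + _).
rewrite big_mkcond big_nat_recr /=; last by rewrite mulSn; lia.
rewrite dvdn_mull // muln_gt0 p0 /= big_nat_cond big1 ?add0r // => x /andP[/andP[h1 h2] _].
case: ifP => // /andP[/dvdnP[q hq] _]; exfalso; subst x.
by move: h1 h2; rewrite !ltn_pmul2r //; lia.
Qed.

Lemma sum_trunc (F : nat -> int) (P : pred nat) a b : (a <= b)%N ->
  (forall x, (a <= x < b)%N -> P x -> F x = 0) ->
  \sum_(0 <= x < b | P x) F x = \sum_(0 <= x < a | P x) F x.
Proof.
move=> hab hF; rewrite [LHS](big_cat_nat _ (n:=a)) //= [X in _ + X]big_nat_cond.
by rewrite [X in _ + X]big1 ?addr0 // => x /andP[/hF].
Qed.
Lemma moebius_pM p m : prime p -> (0 < m)%N ->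
  moebius (p * m) = if (p %| m)%N then 0 else - moebius m.
Proof.
move=> pp m0; have p0 := prime_gt0 pp.
have pm0 : (0 < p * m)%N by rewrite muln_gt0 p0.
have lpm q : logn q (p * m) = ((q == p) + logn q m)%N by rewrite lognM // logn_prime.
have [pdm|pdm] := boolP (p %| m)%N; rewrite /moebius.
  have /negbTE -> : ~~ all (fun q => logn q (p * m) == 1%N) (primes (p * m)).
    apply/allPn; exists p; first by rewrite mem_primes pp pm0 dvdn_mulr.
    rewrite lpm eqxx; have : (0 < logn p m)%N by rewrite logn_gt0 mem_primes pp m0 pdm.
    lia.
  by [].
have pnm : p \notin primes m by rewrite mem_primes (negbTE pdm) !andbF.
have hperm : perm_eq (primes (p * m)) (p :: primes m).
  apply: uniq_perm; first exact: primes_uniq.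
    by rewrite /= pnm primes_uniq.
  move=> q; rewrite primesM // primes_prime // in_cons inE.
  by rewrite in_nil orbF.
rewrite (perm_all _ hperm) (perm_size hperm) /= lpm eqxx.
have -> : logn p m = 0%N by apply/eqP; rewrite -leqn0 leqNgt logn_gt0.
rewrite /=.
have -> : all (fun q => logn q (p * m) == 1%N) (primes m) =
          all (fun q => logn q m == 1%N) (primes m).
  apply: eq_in_all => q qm; rewrite lpm.
  have -> : (q == p) = false by apply/negbTE; apply: contraNneq pnm => <-.
  by [].
by case: ifP => _; rewrite ?exprS ?mulN1r ?oppr0.
Qed.

Lemma moebius_sum d : (0 < d)%N ->
  \sum_(0 <= m < d.+1 | (m %| d)%N) moebius m = (d == 1%N)%:R.
Proof.
move=> d0; have [->|d1] := eqVneq d 1%N.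
  by rewrite big_mkcond !big_nat_recr //= big_geq // /moebius /=.
have {d0 d1} d1 : (1 < d)%N by lia.
set p := pdiv d; have pp : prime p := pdiv_prime d1.
have p1 := prime_gt1 pp; have p0 := prime_gt0 pp.
set e := (d %/ p)%N; have hd : d = (e * p)%N by rewrite divnK // pdiv_dvd.
have e0 : (0 < e)%N by move: d1; rewrite hd; case: (e) => //.
rewrite (bigID (fun m => p %| m)%N) /=.
have H1 : \sum_(0 <= i < d.+1 | (i %| d)%N && (p %| i)%N) moebius i =
     - \sum_(0 <= m < e.+1 | (m %| e)%N && ~~ (p %| m)%N) moebius m.
  transitivity (\sum_(0 <= x < (e * p).+1 | ((p %| x) && (0 < x))%N)
                   (if (x %| d)%N then moebius x else 0)).
    rewrite -hd big_mkcond [RHS]big_mkcond; apply: eq_bigr => x _.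
    case: x => [|x]; first by rewrite dvd0n; case: eqP => [?|_] /=; [lia | rewrite !andbF].
        by rewrite ltn0Sn andbT; case: (x.+1 %| d)%N; case: (p %| x.+1)%N.
  rewrite -sumL // [in RHS]big_ltn_cond // dvd0n (_ : (e == 0%N) = false) /=; last by lia.
  rewrite big_add1 /= -sumrN [RHS]big_mkcond; apply: eq_bigr => j _.
  rewrite hd dvdn_pmul2r // mulnC moebius_pM //.
  by case: (j.+1 %| e)%N; case: (p %| j.+1)%N; rewrite ?oppr0 ?opprK.
rewrite H1.
have H2 : \sum_(0 <= i < d.+1 | (i %| d)%N && ~~ (p %| i)%N) moebius i =
     \sum_(0 <= m < e.+1 | (m %| e)%N && ~~ (p %| m)%N) moebius m.
  rewrite (sum_trunc _ _ e.+1); last 2 first.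
  - by rewrite ltnS hd leq_pmulr.
  - move=> x /andP[hx _] /andP[hxd hpx]; exfalso.
    have : (x %| e)%N by move: hxd; rewrite hd Gauss_dvdl // coprime_sym prime_coprime.
    move/(dvdn_leq e0); lia.
  apply: eq_bigl => m; case: (boolP (p %| m)%N) => pm; rewrite ?andbF ?andbT //.
  rewrite hd Gauss_dvdl //.
  by rewrite coprime_sym prime_coprime.
by rewrite H2 addNr.
Qed.

Lemma omega_neg n x : (n < x)%N -> omega (n%:Z - x%:Z) = 0.
Proof.
move=> h; have -> : n%:Z - x%:Z = Negz (x - n).-1 by rewrite NegzE; lia.
by [].
Qed.

Lemma OmegaE n m : (1 <= m <= n)%N ->
  Omega m (n - m)%:Z =
  \sum_(0 <= x < n.+1 | ((m %| x) && (0 < x))%N) omega (n%:Z - x%:Z).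
Proof.
move=> /andP[m1 mn]; rewrite /Omega /=.
transitivity (\sum_(0 <= j < (n - m).+1) omega (n%:Z - (j.+1 * m)%N%:Z)).
  by apply: eq_bigr => j _; congr omega; lia.
rewrite (sumL (fun x => omega (n%:Z - x%:Z))) //; apply: sum_trunc; first by nia.
by move=> x /andP[hx _] _; apply: omega_neg.
Qed.

Theorem mainTheorem7 (n : nat) (hn : (1 < n)%N) :
  omega (n.-1)%:Z = \sum_(1 <= m < n.+1) moebius m * Omega m (n - m)%:Z.
Proof.
set G := fun x : nat => omega (n%:Z - x%:Z).
transitivity (\sum_(1 <= m < n.+1) \sum_(0 <= x < n.+1)
   (if ((m %| x) && (0 < x))%N then moebius m * G x else 0)); last first.
  rewrite big_nat_cond [RHS]big_nat_cond; apply: eq_bigr => m /andP[hm _].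
  by rewrite OmegaE // big_distrr [RHS]big_mkcond.
rewrite exchange_big_nat /=.
transitivity (\sum_(0 <= x < n.+1) G x * (x == 1%N)%:R).
  rewrite big_ltn // big_ltn; last by lia.
  have -> : \sum_(2 <= i < n.+1) G i * (i == 1%N)%:R = 0.
    apply: big1_seq => x /andP[_]; rewrite mem_index_iota => /andP[hx _].
    by rewrite (_ : (x == 1%N) = false) ?mulr0 //; lia.
  rewrite /= mulr0 mulr1 add0r addr0 /G; have -> : n%:Z - 1%:Z = (n.-1)%:Z by lia.
  by [].
apply: eq_big_nat => x /andP[_ hx].
case: x hx => [|x] hx.
  by rewrite big1 ?mulr0 // => m _; rewrite andbF.
rewrite -(moebius_sum x.+1 (ltn0Sn x)) big_distrr /=.
rewrite ltn0Sn [RHS](eq_bigr (fun i => if (i %| x.+1)%N then moebius i * G x.+1 else 0)); last by move=> i _; rewrite andbT.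
rewrite -[RHS]big_mkcond.
have -> : \sum_(1 <= i < n.+1 | (i %| x.+1)%N) moebius i * G x.+1 =
          \sum_(0 <= i < n.+1 | (i %| x.+1)%N) moebius i * G x.+1.
  by rewrite [RHS]big_ltn_cond.
rewrite [RHS](sum_trunc _ _ x.+2) //; last first.
  by move=> i /andP[hi _] /(dvdn_leq (ltn0Sn x)); lia.
by apply: eq_bigr => i _; rewrite mulrC.
Qed.
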